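(* Let $\mu$ be a probability measure on $\mathrm{Homeo}_+(\mathbb{R})$ with finite or countable support having the shiftability property. If there exist $x,y\in\mathbb{R}$ with $\phi_+(x)>0$ and $\phi_-(y)>0$, then $\phi_+(z)+\phi_-(z)=1$ for every $z\in\mathbb{R}$.
   Context: Setup. Let $\mu$ be a probability measure on the group $\mathrm{Homeo}_+(\mathbb{R})$ of orientation-preserving homeomorphisms of $\mathbb{R}$, supported on a finite or countable set $\{f_1,f_2,\dots\}$ with $p_i=\mu(\{f_i\})>0$, $\sum_i p_i=1$. Let $g_1,g_2,\dots$ be i.i.d. random maps with law $\mu$, and set $F_0=\mathrm{id}$, $F_n=g_n\circ\cdots\circ g_1$. For $x\in\mathbb{R}$ let $\phi_+(x)=\mathbb{P}(\lim_n F_n(x)=+\infty)$ and $\phi_-(x)=\mathbb{P}(\lim_n F_n(x)=-\infty)$. The system has the shiftability property if for every $x\in\mathbb{R}$ there exist $f,g$ with $\mu(\{f\})>0$, $\mu(\{g\})>0$ and $g(x)<x<f(x)$. *)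

(* Defs.v *)
From HB Require Import structures.
From mathcomp Require Import all_boot all_order all_algebra.
From mathcomp Require Import all_classical all_reals all_analysis.
Set Implicit Arguments. Unset Strict Implicit. Unset Printing Implicit Defensive.
Import Order.TTheory GRing.Theory Num.Theory numFieldNormedType.Exports.
Local Open Scope classical_set_scope.
Local Open Scope ring_scope.

Definition homeo_plus (R : realType) (f : R -> R) : Prop :=
  (exists g : R -> R, cancel f g /\ cancel g f /\ continuous (g : R -> R))
  /\ continuous (f : R -> R) /\ (forall x y : R, x < y -> f x < f y).

(* F_n = g_n o ... o g_1, with g_{k+1} = fs (xi k w) *)
Fixpoint Fcomp (R : realType) (I Omega : Type) (fs : I -> R -> R)
  (xi : nat -> Omega -> I) (n : nat) (w : Omega) (x : R) : R :=
  match n with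
  | 0 => x
  | n'.+1 => fs (xi n' w) (Fcomp fs xi n' w x)
  end.

(* xi_0, xi_1, ... are i.i.d. with P(xi_n = i) = p i: every finite-dimensional
   joint law is the product law. *)
Definition iid_law (R : realType) (d : measure_display) (Omega : measurableType d)
  (P : probability Omega R) (I : Type) (p : I -> R) (xi : nat -> Omega -> I) : Prop :=
  forall (n : nat) (s : nat -> I),
    P (\bigcap_(k in [set k | (k < n)%N]) (xi k @^-1` [set s k]))
    = (\prod_(k < n) p (s k))%:E.

Definition event_pinfty (R : realType) (I Omega : Type) (fs : I -> R -> R)
  (xi : nat -> Omega -> I) (x : R) : set Omega :=
  [set w | (fun n => Fcomp fs xi n w x) @ \oo --> +oo].

Definition event_ninfty (R : realType) (I Omega : Type) (fs : I -> R -> R)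
  (xi : nat -> Omega -> I) (x : R) : set Omega :=
  [set w | (fun n => Fcomp fs xi n w x) @ \oo --> -oo].

Definition shiftable (R : realType) (I : Type) (fs : I -> R -> R) : Prop :=
  forall x : R, exists i j : I, fs j x < x < fs i x.

(* Main.v *)
Require Import Defs.
From HB Require Import structures.
From mathcomp Require Import all_boot all_order all_algebra.
From mathcomp Require Import all_classical all_reals all_analysis.
From mathcomp Require Import ring lra.
Import Order.TTheory GRing.Theory Num.Theory numFieldNormedType.Exports.
Local Open Scope classical_set_scope.
Local Open Scope ring_scope.
Set Implicit Arguments. Unset Strict Implicit. Unset Printing Implicit Defensive.

Section Basic.
Variables (R : realType) (I : countType) (fs : I -> R -> R).

Definition Fw (t : seq I) (y : R) : R := foldl (fun y i => fs i y) y t.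
Definition word (Omega : Type) (z : nat -> Omega -> I) n w : seq I :=
  mkseq (fun k => z k w) n.
Definition shift (Omega : Type) (z : nat -> Omega -> I) n : nat -> Omega -> I :=
  fun k => z (n + k)%N.

Lemma Fcomp_word Omega (z : nat -> Omega -> I) n w x :
  Fcomp fs z n w x = Fw (word z n w) x.
Proof.
elim: n => [//|n IH]; rewrite [LHS]/= /word mkseqS /Fw foldl_rcons -/(Fw _ _).
by rewrite -/(word z n w) -IH.
Qed.

Lemma Fcomp_shift Omega (z : nat -> Omega -> I) n m w x :
  Fcomp fs z (n + m) w x = Fcomp fs (shift z n) m w (Fcomp fs z n w x).
Proof.
elim: m => [|m IH]; first by rewrite addn0.
by rewrite addnS /= IH.
Qed.

Lemma word_size Omega (z : nat -> Omega -> I) n w : size (word z n w) = n.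
Proof. by rewrite size_mkseq. Qed.

Lemma word_add Omega (z : nat -> Omega -> I) n m w :
  word z (n + m) w = word z n w ++ word (shift z n) m w.
Proof. rewrite /word /mkseq iotaD map_cat add0n; congr (_ ++ _).
by rewrite -[X in iota X m]addn0 iotaDl -map_comp. Qed.

Lemma word_take Omega (z : nat -> Omega -> I) n m w : (n <= m)%N ->
  take n (word z m w) = word z n w.
Proof. by move=> nm; rewrite -(subnKC nm) word_add take_size_cat ?word_size. Qed.

Definition Cyl (Omega : Type) (z : nat -> Omega -> I) (t : seq I) : set Omega :=
  [set w | word z (size t) w = t].
Definition Lev (Omega : Type) (z : nat -> Omega -> I) n (S : set (seq I)) : set Omega :=
  [set w | S (word z n w)].
Definition pc (Omega : Type) (z : nat -> Omega -> I) n (S : set (seq I)) (k : nat) : set Omega :=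
  Lev z n (S `&` [set t | pickle_inv k = Some t]).
End Basic.

Section Prob.
Variables (R : realType) (I : countType) (p : I -> R).
Variables (d : measure_display) (Omega : measurableType d) (P : probability Omega R).

Definition prodw (t : seq I) : R := \prod_(i <- t) p i.

Definition zmeas (z : nat -> Omega -> I) := forall k i, measurable (z k @^-1` [set i]).
Implicit Types (z : nat -> Omega -> I) (S : set (seq I)) (t s : seq I).

Lemma Cyl_meas z t : zmeas z -> measurable (Cyl z t).
Proof.
move=> zm; case: t => [|a t].
  rewrite [X in measurable X](_ : _ = setT) //; apply/seteqP; split => // w _.
set u := a :: t.
rewrite [X in measurable X](_ : _ = \bigcap_k (if (k < size u)%N then
   z k @^-1` [set nth a u k] else setT)).
  apply: bigcapT_measurable => k; case: ifP => // _; exact: zm.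
apply/seteqP; split => w /=.
  move=> Hw k _; case: ifP => // ku; rewrite -Hw /word nth_mkseq //.
move=> Hw; apply: (@eq_from_nth _ a); first by rewrite word_size.
move=> k; rewrite word_size => ku; rewrite /word nth_mkseq //.
by move: (Hw k Logic.I); case: ifP => [_ //|]; rewrite -/u ku.
Qed.

Lemma pc_cases z n S k : (exists s, size s = n /\ S s /\ forall z', pc z' n S k = Cyl z' s)
  \/ (forall z', pc z' n S k = set0).
Proof.
case E: (pickle_inv k) => [s|]; last first.
  by right => z'; apply/seteqP; split => w //= [_]; rewrite E.
have [[Ss sn]|nS] := pselect (S s /\ size s = n).
  left; exists s; split => //; split => // z'; apply/seteqP; split => w /=.
    by move=> [_]; rewrite E => -[->]; rewrite /Cyl /= word_size.
  by rewrite /Cyl /pc /Lev /= sn => ->; split.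
right => z'; apply/seteqP; split => w //= [Sw]; rewrite E => -[ws]; apply: nS.
by rewrite ws word_size.
Qed.

Lemma pc_meas z n S k : zmeas z -> measurable (pc z n S k).
Proof.
move=> zm; case: (pc_cases z n S k) => [[s [_ [_ ->]]]|->] //; exact: Cyl_meas.
Qed.

Lemma Lev_bigcup z n S : Lev z n S = \bigcup_k pc z n S k.
Proof.
apply/seteqP; split => w /=.
  by move=> Sw; exists (pickle (word z n w)) => //; split => //=; rewrite pickleK_inv.
by move=> [k _ [Sw _]].
Qed.

Lemma pc_triv z n S : trivIset setT (pc z n S).
Proof.
move=> i j _ _ [w [[_ /= Hi] [_ /= Hj]]].
by rewrite -(@pickle_invK (seq I) i) -(@pickle_invK (seq I) j) Hi Hj.
Qed.

Lemma Lev_meas z n S : zmeas z -> measurable (Lev z n S).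
Proof. by move=> zm; rewrite Lev_bigcup; apply: bigcupT_measurable => k; exact: pc_meas. Qed.

Lemma P_Lev_sum z n S D : zmeas z -> measurable D ->
  P (D `&` Lev z n S) = (\sum_(k <oo) P (D `&` pc z n S k))%E.
Proof.
move=> zm mD; rewrite Lev_bigcup setI_bigcupr measure_semi_bigcup //.
- by move=> k; apply: measurableI => //; exact: pc_meas.
- by apply: trivIset_setIl; exact: pc_triv.
- apply: bigcupT_measurable => k; apply: measurableI => //; exact: pc_meas.
Qed.

End Prob.

Section Iid.
Variables (R : realType) (I : countType) (p : I -> R).
Variables (d : measure_display) (Omega : measurableType d) (P : probability Omega R).
Variable xi : nat -> Omega -> I.
Hypothesis xim : zmeas xi.
Hypothesis iid : iid_law P p xi.
Implicit Types (z : nat -> Omega -> I) (S : set (seq I)) (t s : seq I).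

Lemma zmeas_shift n : zmeas (shift xi n).
Proof. by move=> k i; exact: xim. Qed.

Lemma P_Cyl t : P (Cyl xi t) = (prodw p t)%:E.
Proof.
case: t => [|a t].
  rewrite /prodw big_nil -(probability_setT P); congr (P _).
  by apply/seteqP; split.
set u := a :: t.
have -> : Cyl xi u = \bigcap_(k in [set k | (k < size u)%N]) (xi k @^-1` [set nth a u k]).
  apply/seteqP; split => w /=.
    by move=> Hw k ku; rewrite -Hw /word nth_mkseq.
  move=> Hw; apply: (@eq_from_nth _ a); first by rewrite word_size.
  by move=> k; rewrite word_size => ku; rewrite /word nth_mkseq // Hw.
rewrite iid /prodw (big_nth a) big_mkord //.
Qed.

Lemma Cyl_cat z t s : Cyl z t `&` Cyl (shift z (size t)) s = Cyl z (t ++ s).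
Proof.
apply/seteqP; split => w /=.
  by rewrite /Cyl /= size_cat word_add => -[-> ->].
rewrite /Cyl /= size_cat word_add => /eqP; rewrite eqseq_cat ?word_size //.
by case/andP => /eqP -> /eqP ->.
Qed.

Lemma prodw_cat t s : prodw p (t ++ s) = prodw p t * prodw p s.
Proof. by rewrite /prodw big_cat. Qed.

Lemma markov_Lev t m S :
  P (Cyl xi t `&` Lev (shift xi (size t)) m S) = ((prodw p t)%:E * P (Lev xi m S))%E.
Proof.
rewrite P_Lev_sum; [|exact: zmeas_shift|exact: Cyl_meas].
rewrite -[Lev xi m S]setTI P_Lev_sum // -nneseriesZl //.
apply: eq_eseriesr => k _; rewrite setTI.
case: (pc_cases xi m S k) => [[s [sm [Ss E]]]|E]; rewrite !E.
  by rewrite Cyl_cat !P_Cyl prodw_cat EFinM.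
by rewrite setI0 measure0 mule0.
Qed.
End Iid.

Section Lim.
Variables (R : realType) (d : measure_display) (Omega : measurableType d).
Variable (P : probability Omega R).

Lemma Pfin (A : set Omega) : measurable A -> P A \is a fin_num.
Proof. by move=> mA; apply: fin_num_measure. Qed.

Lemma lim_up (C : set Omega) (c : R) (F G : nat -> set Omega) :
  measurable C -> (forall k, measurable (F k)) -> (forall k, measurable (G k)) ->
  (forall n m, (n <= m)%N -> F n `<=` F m) -> (forall n m, (n <= m)%N -> G n `<=` G m) ->
  (forall k, P (C `&` F k) = (c%:E * P (G k))%E) ->
  P (C `&` \bigcup_k F k) = (c%:E * P (\bigcup_k G k))%E.
Proof.
move=> mC mF mG uF uG E.
have mCF k : measurable (C `&` F k) by exact: measurableI.
have h1 : (P \o (fun k => C `&` F k)) @ \oo --> P (\bigcup_k (C `&` F k)).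
  apply: nondecreasing_cvg_mu => //; first exact: bigcupT_measurable.
  by move=> n m nm; rewrite subsetEset; apply: setIS; exact: uF.
have h2 : (P \o G) @ \oo --> P (\bigcup_k G k).
  apply: nondecreasing_cvg_mu => //; first exact: bigcupT_measurable.
  by move=> n m nm; rewrite subsetEset; exact: uG.
have h3 : (fun k => c%:E * P (G k))%E @ \oo --> (c%:E * P (\bigcup_k G k))%E.
  exact: cvgeZl.
rewrite setI_bigcupr; apply: (@cvg_unique _ (@ereal_hausdorff R) _ _ _ _ h1).
by rewrite (_ : P \o _ = (fun k => c%:E * P (G k))%E) //; apply: funext => k; exact: E.
Qed.

Lemma lim_down (C : set Omega) (c : R) (F G : nat -> set Omega) :
  measurable C -> (forall k, measurable (F k)) -> (forall k, measurable (G k)) ->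
  (forall n m, (n <= m)%N -> F m `<=` F n) -> (forall n m, (n <= m)%N -> G m `<=` G n) ->
  (forall k, P (C `&` F k) = (c%:E * P (G k))%E) ->
  P (C `&` \bigcap_k F k) = (c%:E * P (\bigcap_k G k))%E.
Proof.
move=> mC mF mG uF uG E.
have mCF k : measurable (C `&` F k) by exact: measurableI.
have h1 : (P \o (fun k => C `&` F k)) @ \oo --> P (\bigcap_k (C `&` F k)).
  apply: nonincreasing_cvg_mu => //.
  - by rewrite (le_lt_trans (probability_le1 _ _)) ?ltry.
  - exact: bigcapT_measurable.
  by move=> n m nm; rewrite subsetEset; apply: setIS; exact: uF.
have h2 : (P \o G) @ \oo --> P (\bigcap_k G k).
  apply: nonincreasing_cvg_mu => //.
  - by rewrite (le_lt_trans (probability_le1 _ _)) ?ltry.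
  - exact: bigcapT_measurable.
  by move=> n m nm; rewrite subsetEset; exact: uG.
have h3 : (fun k => c%:E * P (G k))%E @ \oo --> (c%:E * P (\bigcap_k G k))%E.
  exact: cvgeZl.
rewrite -bigcapIr; last by exists 0%N.
apply: (@cvg_unique _ (@ereal_hausdorff R) _ _ _ _ h1).
by rewrite (_ : P \o _ = (fun k => c%:E * P (G k))%E) //; apply: funext => k; exact: E.
Qed.

End Lim.

Section Esc.
Variables (R : realType) (I : countType) (fs : I -> R -> R).
Variables (Omega : Type).
Implicit Types (z : nat -> Omega -> I).

Lemma pinftyP z x w : event_pinfty fs z x w <->
  forall M : nat, exists N, forall j, M%:R < Fcomp fs z (N + j) w x.
Proof.
rewrite /event_pinfty /= cvgryPgt; split.
  move=> H M; have [N _ HN] := H M%:R; exists N => j; apply: HN => /=; exact: leq_addr.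
move=> H A; have [N HN] := H (Num.bound `|A|); exists N => // n /= Nn.
rewrite -(subnKC Nn); apply: le_lt_trans (HN _).
by rewrite ltW // (le_lt_trans (ler_norm A)) // archi_boundP.
Qed.

Definition Wset z x (M N K : nat) :=
  Lev z (N + K) [set t | forall j, (j <= K)%N -> M%:R < Fw fs (take (N + j) t) x].

Lemma WsetE z x M N K w : Wset z x M N K w <->
  forall j, (j <= K)%N -> M%:R < Fcomp fs z (N + j) w x.
Proof.
rewrite /Wset /Lev /=; split => H j jK; have := H j jK;
by rewrite word_take ?leq_add2l // Fcomp_word.
Qed.

Lemma pinftyE z x : event_pinfty fs z x =
  \bigcap_M \bigcup_N \bigcap_K Wset z x M N K.
Proof.
apply/seteqP; split => w.
  move/pinftyP => H M _; have [N HN] := H M; exists N => // K _.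
  by apply/WsetE => j _; exact: HN.
move=> H; apply/pinftyP => M; have [N _ HN] := H M Logic.I; exists N => j.
by have /WsetE := HN j Logic.I; apply.
Qed.

Lemma Wset_dec z x M N K K' : (K <= K')%N -> Wset z x M N K' `<=` Wset z x M N K.
Proof.
move=> KK w /WsetE H; apply/WsetE => j jK; apply: H; exact: leq_trans KK.
Qed.

Lemma Ys_inc z x M N N' : (N <= N')%N ->
  \bigcap_K Wset z x M N K `<=` \bigcap_K Wset z x M N' K.
Proof.
move=> NN w H K _; apply/WsetE => j _.
have /WsetE := H (N' - N + j)%N Logic.I; move/(_ (N' - N + j)%N (leqnn _)).
by rewrite addnA subnKC.
Qed.

Lemma Xs_dec z x M M' : (M <= M')%N ->
  \bigcup_N \bigcap_K Wset z x M' N K `<=` \bigcup_N \bigcap_K Wset z x M N K.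
Proof.
move=> MM w [N _ H]; exists N => // K _; apply/WsetE => j jK.
have /WsetE := H K Logic.I; move/(_ j jK); apply: le_lt_trans.
by rewrite ler_nat.
Qed.

End Esc.

Lemma pinfty_meas (R : realType) (I : countType) (fs : I -> R -> R) (d : measure_display) (T : measurableType d) (z : nat -> T -> I) x :
  zmeas z -> measurable (event_pinfty fs z x).
Proof.
move=> zm; rewrite pinftyE; apply: bigcapT_measurable => M.
apply: bigcupT_measurable => N; apply: bigcapT_measurable => K; exact: Lev_meas.
Qed.


Section Markov.
Variables (R : realType) (I : countType) (fs : I -> R -> R) (p : I -> R).
Variables (d : measure_display) (Omega : measurableType d) (P : probability Omega R).
Variable xi : nat -> Omega -> I.
Hypothesis xim : zmeas xi.
Hypothesis iid : iid_law P p xi.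

Lemma Xs_meas (z : nat -> Omega -> I) x M : zmeas z -> measurable (\bigcup_N \bigcap_K Wset fs z x M N K).
Proof.
by move=> zm; apply: bigcupT_measurable => N; apply: bigcapT_measurable => K; exact: Lev_meas.
Qed.

Lemma markov_pinfty t y :
  P (Cyl xi t `&` event_pinfty fs (shift xi (size t)) y) =
  ((prodw p t)%:E * P (event_pinfty fs xi y))%E.
Proof.
have zs := zmeas_shift xim (size t).
rewrite !pinftyE; apply: lim_down.
- exact: Cyl_meas.
- by move=> M; exact: Xs_meas.
- by move=> M; exact: Xs_meas.
- by move=> M M' MM; exact: Xs_dec.
- by move=> M M' MM; exact: Xs_dec.
move=> M; apply: lim_up.
- exact: Cyl_meas.
- by move=> N; apply: bigcapT_measurable => K; exact: Lev_meas.
- by move=> N; apply: bigcapT_measurable => K; exact: Lev_meas.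
- by move=> N N' NN; exact: Ys_inc.
- by move=> N N' NN; exact: Ys_inc.
move=> N; apply: lim_down.
- exact: Cyl_meas.
- by move=> K; exact: Lev_meas.
- by move=> K; exact: Lev_meas.
- by move=> K K' KK; exact: Wset_dec.
- by move=> K K' KK; exact: Wset_dec.
by move=> K; rewrite /Wset (markov_Lev xim iid).
Qed.

End Markov.

Section Link.
Variables (R : realType) (I : countType) (fs : I -> R -> R) (Omega : Type).
Implicit Types (z : nat -> Omega -> I).

Lemma cyl_link z t x : Cyl z t `&` event_pinfty fs z x =
  Cyl z t `&` event_pinfty fs (shift z (size t)) (Fw fs t x).
Proof.
have key w m : Cyl z t w ->
    Fcomp fs z (size t + m) w x = Fcomp fs (shift z (size t)) m w (Fw fs t x).
  by move=> Cw; rewrite Fcomp_shift [Fcomp fs z _ w x]Fcomp_word Cw.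
apply/seteqP; split => w [Cw H]; split => //; move: H; rewrite !pinftyP.
  move=> H M; have [N HN] := H M; exists N => j.
  by rewrite -key // addnCA; exact: HN.
move=> H M; have [N HN] := H M; exists (N + size t)%N => j.
by rewrite -addnA addnCA key.
Qed.

Hypothesis fs_mono : forall i, {homo fs i : a b / a <= b}.

Lemma Fcomp_mono z n w x x' : x <= x' -> Fcomp fs z n w x <= Fcomp fs z n w x'.
Proof. by move=> xx; elim: n => //= n IH; exact: fs_mono. Qed.

Lemma pinfty_mono z x x' : x <= x' -> event_pinfty fs z x `<=` event_pinfty fs z x'.
Proof.
move=> xx w; rewrite !pinftyP => H M; have [N HN] := H M; exists N => j.
by apply: lt_le_trans (HN j) _; exact: Fcomp_mono.
Qed.

End Link.

Definition negf (R : realType) (I : Type) (fs : I -> R -> R) : I -> R -> R :=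
  fun i y => - fs i (- y).

Lemma Fcomp_negf (R : realType) (I Omega : Type) (fs : I -> R -> R) z n (w : Omega) x :
  Fcomp (negf fs) z n w x = - Fcomp fs z n w (- x).
Proof. by elim: n => [|n IH] /=; [rewrite opprK|rewrite /negf IH opprK]. Qed.

Lemma ninfty_negf (R : realType) (I Omega : Type) (fs : I -> R -> R)
   (z : nat -> Omega -> I) x :
  event_ninfty fs z x = event_pinfty (negf fs) z (- x).
Proof.
have E w : (fun n => Fcomp (negf fs) z n w (- x)) = - (fun n => Fcomp fs z n w x).
  by apply: funext => n; rewrite Fcomp_negf opprK.
apply/seteqP; split => w; rewrite /event_pinfty /event_ninfty /= E.
  by move=> H; apply/cvgNry.
by move/cvgNry.
Qed.

Section Reach.
Variables (R : realType) (I : countType) (fs : I -> R -> R).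
Hypothesis fcont : forall i, continuous (fs i : R -> R).
Hypothesis shf : forall x, exists i, x < fs i x.

Lemma reach z x0 : exists t, x0 <= Fw fs t z.
Proof.
have [//|H] := pselect (exists t, x0 <= Fw fs t z).
have H' t : Fw fs t z < x0.
  by rewrite ltNge; apply/negP => Ht; apply: H; exists t.
pose E := [set y | exists t, y = Fw fs t z].
have hE : has_sup E.
  split; first by exists z, [::].
  by exists x0 => y [t ->]; exact/ltW/H'.
have [i hi] := shf (sup E).
have h := cvgr_gt _ (@fcont i (sup E)) _ hi.
have [e /= e0 He] := (nbhs_ballP (sup E) _).1 (h _).
have [_ [t ->] Hy] := sup_adherent e0 hE.
have ub := sup_upper_bound hE.
have Ht : Fw fs t z <= sup E by apply: ub; exists t.
have : sup E < Fw fs (rcons t i) z.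
  rewrite /Fw foldl_rcons; apply: He.
  rewrite -ball_normE /ball_ /= ger0_norm ?subr_ge0 //.
  by rewrite ltrBlDr addrC -ltrBlDr.
by rewrite ltNge ub //; exists (rcons t i).
Qed.
End Reach.

Lemma Fw_negf (R : realType) (I : countType) (fs : I -> R -> R) t x :
  Fw (negf fs) t (- x) = - Fw fs t x.
Proof.
elim/last_ind: t => [|t i IH]; first by [].
by rewrite /Fw !foldl_rcons -!/(Fw _ _ _) IH /negf opprK.
Qed.

Section Pos.
Variables (R : realType) (I : countType) (fs : I -> R -> R) (p : I -> R).
Variables (d : measure_display) (Omega : measurableType d) (P : probability Omega R).
Variable xi : nat -> Omega -> I.
Hypothesis xim : zmeas xi.
Hypothesis iid : iid_law P p xi.
Hypothesis ppos : forall i, 0 < p i.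

Lemma prodw_gt0 t : 0 < prodw p t.
Proof. by apply: prodr_gt0 => i _. Qed.

Lemma markov_cyl t x :
  P (Cyl xi t `&` event_pinfty fs xi x) =
  ((prodw p t)%:E * P (event_pinfty fs xi (Fw fs t x)))%E.
Proof. by rewrite cyl_link (markov_pinfty _ xim iid). Qed.

Hypothesis fs_mono : forall i, {homo fs i : a b / a <= b}.
Hypothesis fcont : forall i, continuous (fs i : R -> R).
Hypothesis shf : forall x, exists i, x < fs i x.

Lemma pos_everywhere x0 : (0 < P (event_pinfty fs xi x0))%E ->
  forall z, (0 < P (event_pinfty fs xi z))%E.
Proof.
move=> h0 z; have [t ht] := reach fcont shf z x0.
have mA y : measurable (event_pinfty fs xi y) by exact: pinfty_meas.
apply: (@lt_le_trans _ _ (P (Cyl xi t `&` event_pinfty fs xi z))); last first.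
  exact: (measureIr _ (Cyl_meas t xim) (mA z)).
rewrite markov_cyl; apply: mule_gt0; first by rewrite lte_fin prodw_gt0.
apply: (lt_le_trans h0); apply: le_measure; rewrite ?inE //.
exact: pinfty_mono.
Qed.

End Pos.

Section Approx.
Variables (R : realType) (I : countType).
Variables (d : measure_display) (Omega : measurableType d) (P : probability Omega R).
Variable xi : nat -> Omega -> I.
Hypothesis xim : zmeas xi.
Implicit Types (A B G : set Omega) (S : set (seq I)).

Definition Pr A : R := fine (P A).

Lemma PrE A : measurable A -> P A = (Pr A)%:E.
Proof. by move=> mA; rewrite /Pr fineK // Pfin. Qed.

Lemma Pr_ge0 A : 0 <= Pr A.
Proof. exact: fine_ge0. Qed.

Lemma Pr_le A B : measurable A -> measurable B -> A `<=` B -> Pr A <= Pr B.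
Proof.
move=> mA mB AB; rewrite -lee_fin -!PrE //; apply: le_measure; rewrite ?inE //.
Qed.

Lemma Pr_U2 A B : measurable A -> measurable B -> Pr (A `|` B) <= Pr A + Pr B.
Proof.
move=> mA mB; rewrite -lee_fin EFinD -!PrE //; last exact: measurableU.
exact: measureU2.
Qed.

Definition approx G := measurable G /\ forall e, 0 < e ->
  exists n S, Pr (G `\` Lev xi n S) + Pr (Lev xi n S `\` G) < e.

Lemma Lev_lift n m S : Lev xi n S = Lev xi (n + m) [set t | S (take n t)].
Proof. by apply/seteqP; split => w; rewrite /Lev /= word_take ?leq_addr. Qed.

Lemma approx_Lev n S : approx (Lev xi n S).
Proof.
split; first exact: Lev_meas.
by move=> e e0; exists n, S; rewrite !setDv /Pr measure0 addr0.
Qed.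

Lemma approx_C G : approx G -> approx (~` G).
Proof.
move=> [mG H]; split; first exact: measurableC.
move=> e e0; have [n [S HS]] := H e e0; exists n, (~` S).
have -> : Lev xi n (~` S) = ~` Lev xi n S by [].
by rewrite !setDE !setCK setIC addrC [_ `&` G]setIC.
Qed.

Lemma approx_U G1 G2 : approx G1 -> approx G2 -> approx (G1 `|` G2).
Proof.
move=> [m1 H1] [m2 H2]; split; first exact: measurableU.
move=> e e0; have e20 : 0 < e / 2 by rewrite divr_gt0.
have [n1 [S1 HS1]] := H1 _ e20; have [n2 [S2 HS2]] := H2 _ e20.
rewrite (Lev_lift n1 n2) in HS1; rewrite (Lev_lift n2 n1) addnC in HS2.
set U1 := Lev xi (n1 + n2) _ in HS1; set U2 := Lev xi (n1 + n2) _ in HS2.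
exists (n1 + n2)%N, ([set t | S1 (take n1 t)] `|` [set t | S2 (take n2 t)]).
have -> : Lev xi (n1 + n2) ([set t | S1 (take n1 t)] `|` [set t | S2 (take n2 t)])
  = U1 `|` U2 by [].
have mU1 : measurable U1 by exact: Lev_meas.
have mU2 : measurable U2 by exact: Lev_meas.
have le1 : Pr ((G1 `|` G2) `\` (U1 `|` U2)) <= Pr (G1 `\` U1) + Pr (G2 `\` U2).
  apply: le_trans (Pr_U2 _ _); [|exact: measurableD..].
  apply: Pr_le.
  - by apply: measurableD; apply: measurableU.
  - by apply: measurableU; apply: measurableD.
  by move=> w [[?|?] /not_orP [? ?]]; [left|right].
have le2 : Pr ((U1 `|` U2) `\` (G1 `|` G2)) <= Pr (U1 `\` G1) + Pr (U2 `\` G2).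
  apply: le_trans (Pr_U2 _ _); [|exact: measurableD..].
  apply: Pr_le.
  - by apply: measurableD; apply: measurableU.
  - by apply: measurableU; apply: measurableD.
  by move=> w [[?|?] /not_orP [? ?]]; [left|right].
apply: le_lt_trans (lerD le1 le2) _.
rewrite (splitr e); apply: le_lt_trans (ltrD HS1 HS2).
by rewrite addrACA.
Qed.

End Approx.

Section Approx2.
Variables (R : realType) (I : countType).
Variables (d : measure_display) (Omega : measurableType d) (P : probability Omega R).
Variable xi : nat -> Omega -> I.
Hypothesis xim : zmeas xi.

Lemma approx_bigcup (G : nat -> set Omega) : (forall k, approx P xi (G k)) ->
  approx P xi (\bigcup_k G k).
Proof.
move=> aG; have mG k : measurable (G k) := (aG k).1.
have mU : measurable (\bigcup_k G k) by exact: bigcupT_measurable.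
split => // e e0; have e20 : 0 < e / 2 by rewrite divr_gt0.
pose H K := \big[setU/set0]_(i < K.+1) G i.
have aH K : approx P xi (H K).
  elim: K => [|K IH].
    rewrite /H big_ord_recr big_ord0 /= (_ : set0 `|` G 0%N = G 0%N) //.
    by apply/seteqP; split => w; [case|right].
  by rewrite /H big_ord_recr /=; apply: approx_U => //; exact: IH.
have mH K : measurable (H K) := (aH K).1.
have HG K : H K `<=` \bigcup_k G k.
  by move=> w; rewrite /H -bigcup_mkord => -[i _ Hi]; exists i.
have cv : (P \o H) @ \oo --> P (\bigcup_k G k).
  rewrite -bigcup_bigsetU_bigcup; apply: nondecreasing_cvg_mu => //.
  - by rewrite bigcup_bigsetU_bigcup.
  - by move=> n m nm; rewrite subsetEset; apply: subset_bigsetU.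
rewrite (PrE P mU) in cv; have [_ /= cv'] := (fine_cvgP _ _).1 cv.
have lt : Pr P (\bigcup_k G k) - e / 2 < Pr P (\bigcup_k G k).
  by rewrite ltrBlDr ltrDl.
have [N _ HN] := cvgr_gt _ cv' _ lt.
have {}HN := HN N (leqnn N); rewrite /= -/(Pr P (H N)) in HN.
have [n [S HS]] := (aH N).2 _ e20.
have mL : measurable (Lev xi n S) by exact: Lev_meas.
exists n, S.
have h1 : Pr P (\bigcup_k G k `\` H N) < e / 2.
  have E : P (\bigcup_k G k) = (P (\bigcup_k G k `\` H N) + P (\bigcup_k G k `&` H N))%E.
    exact: measureDI.
  rewrite setIidr // !(PrE P) // in E; last exact: measurableD.
  move: E; rewrite -EFinD => -[E]; rewrite E in HN; lra.
have h2 : Pr P (\bigcup_k G k `\` Lev xi n S) <=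
    Pr P (\bigcup_k G k `\` H N) + Pr P (H N `\` Lev xi n S).
  apply: le_trans (Pr_U2 _ _ _); [|exact: measurableD..].
  apply: Pr_le; [exact: measurableD| apply: measurableU; exact: measurableD|].
  move=> w [Gw Lw]; have [hw|hw] := pselect (H N w); [right|left]; by split.
have h3 : Pr P (Lev xi n S `\` \bigcup_k G k) <= Pr P (Lev xi n S `\` H N).
  apply: Pr_le; [exact: measurableD..|].
  by move=> w [Lw nG]; split => // /HG.
apply: le_lt_trans (lerD h2 h3) _.
lra.
Qed.

Lemma approx_bigcap (G : nat -> set Omega) : (forall k, approx P xi (G k)) ->
  approx P xi (\bigcap_k G k).
Proof.
move=> aG; rewrite -[X in approx _ _ X]setCK setC_bigcap; apply: approx_C.
by apply: approx_bigcup => k; apply: approx_C.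
Qed.

End Approx2.

Lemma approx_pinfty (R : realType) (I : countType) (fs : I -> R -> R)
  (d : measure_display) (Omega : measurableType d) (P : probability Omega R)
  (xi : nat -> Omega -> I) x : zmeas xi -> approx P xi (event_pinfty fs xi x).
Proof.
move=> xim; rewrite pinftyE; apply: (approx_bigcap xim) => M.
apply: (approx_bigcup xim) => N.
by apply: (approx_bigcap xim) => K; exact: approx_Lev.
Qed.

Lemma negf_mono (R : realType) (I : countType) (fs : I -> R -> R) :
  (forall i, {homo fs i : a b / a <= b}) -> forall i, {homo negf fs i : a b / a <= b}.
Proof. by move=> h i a b ab; rewrite /negf lerN2; apply: h; rewrite lerN2. Qed.

Lemma negf_cont (R : realType) (I : countType) (fs : I -> R -> R) :
  (forall i, continuous (fs i : R -> R)) -> forall i, continuous (negf fs i : R -> R).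
Proof.
move=> h i y.
have -> : (negf fs i : R -> R) = (fun y => - y) \o ((fs i) \o (fun y => - y)).
  by apply: funext.
apply: continuous_comp; last exact: oppr_continuous.
apply: continuous_comp; first exact: oppr_continuous.
exact: h.
Qed.

Lemma pinfty_ninfty_disj (R : realType) (I : countType) (fs : I -> R -> R)
  (Omega : Type) (z : nat -> Omega -> I) x :
  event_pinfty fs z x `&` event_ninfty fs z x = set0.
Proof.
apply/seteqP; split => w // [].
rewrite ninfty_negf !pinftyP => H1 H2.
have [N1 HN1] := H1 0%N; have [N2 HN2] := H2 0%N.
have := HN1 N2; have := HN2 N1; rewrite Fcomp_negf opprK addnC; lra.
Qed.

Lemma final_arith (R : realType) (c dl a b u : R) :
  c * dl <= c * a + c * u -> c * a <= a -> c * u <= b -> a + b < c * dl -> False.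
Proof. move=> *; lra. Qed.

Section Final.
Variables (R : realType) (I : countType) (fs : I -> R -> R) (p : I -> R).
Variables (d : measure_display) (Omega : measurableType d) (P : probability Omega R).
Variable xi : nat -> Omega -> I.
Hypothesis xim : zmeas xi.
Hypothesis iid : iid_law P p xi.
Hypothesis ppos : forall i, 0 < p i.
Hypothesis fs_mono : forall i, {homo fs i : a b / a <= b}.
Hypothesis fcont : forall i, continuous (fs i : R -> R).
Hypothesis shf2 : shiftable fs.
Hypothesis hx : exists x, (0 < P (event_pinfty fs xi x))%E.
Hypothesis hy : exists y, (0 < P (event_ninfty fs xi y))%E.

Local Notation A y := (event_pinfty fs xi y).
Local Notation B y := (event_ninfty fs xi y).

Lemma shfP x : exists i, x < fs i x.
Proof. by have [i [j /andP [_ h]]] := shf2 x; exists i. Qed.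

Lemma shfN x : exists i, x < negf fs i x.
Proof. by have [i [j /andP [h _]]] := shf2 (- x); exists j; rewrite /negf ltrNr. Qed.

Lemma mA y : measurable (A y).
Proof. exact: pinfty_meas. Qed.

Lemma mB y : measurable (B y).
Proof. rewrite ninfty_negf; exact: pinfty_meas. Qed.

Lemma markov_B t x : P (Cyl xi t `&` B x) = ((prodw p t)%:E * P (B (Fw fs t x)))%E.
Proof. by rewrite !ninfty_negf (markov_cyl _ xim iid) Fw_negf. Qed.

Lemma posA z : (0 < P (A z))%E.
Proof.
have [x hx'] := hx; exact: (pos_everywhere xim iid ppos fs_mono fcont shfP hx').
Qed.

Lemma posB z : (0 < P (B z))%E.
Proof.
have [y hy'] := hy; rewrite ninfty_negf in hy' *.
have := (pos_everywhere xim iid ppos (negf_mono fs_mono) (negf_cont fcont) shfN hy').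
by move=> h; rewrite ninfty_negf; exact: h.
Qed.

Definition cc := Num.min (Pr P (A 0)) (Pr P (B 0)).

Lemma cc_gt0 : 0 < cc.
Proof.
rewrite /cc lt_min -!lte_fin -!(PrE P) ?posA ?posB //; [exact: mB|exact: mA].
Qed.

Lemma cc_le1 : cc <= 1.
Proof.
rewrite /cc ge_min (_ : Pr P (A 0) <= 1) //.
rewrite -lee_fin -(PrE P (mA 0)); exact: probability_le1 (mA 0).
Qed.

Lemma cc_le y : (cc%:E <= P (A y) + P (B y))%E.
Proof.
have [y0|y0] := leP 0 y.
  apply: le_trans (leeDl _ _) => //; apply: (@le_trans _ _ (P (A 0))).
    by rewrite (PrE P (mA 0)) lee_fin /cc ge_min lexx.
  by apply: le_measure; rewrite ?inE; [exact: mA|exact: mA|exact: pinfty_mono].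
apply: le_trans (leeDr _ _) => //; apply: (@le_trans _ _ (P (B 0))).
  by rewrite (PrE P (mB 0)) lee_fin /cc ge_min lexx orbT.
rewrite !ninfty_negf; apply: le_measure; rewrite ?inE; try exact: pinfty_meas.
by apply: pinfty_mono; [exact: negf_mono|rewrite oppr0 oppr_ge0 ltW].
Qed.

Lemma cyl_bound t z :
  (cc%:E * P (Cyl xi t) <= P ((A z `|` B z) `&` Cyl xi t))%E.
Proof.
have mC := Cyl_meas t xim.
rewrite setIC setIUr.
have -> : P ((Cyl xi t `&` A z) `|` (Cyl xi t `&` B z)) =
    (P (Cyl xi t `&` A z) + P (Cyl xi t `&` B z))%E.
  apply: measureU; [exact: measurableI (mA z)|exact: measurableI (mB z)|].
  apply/seteqP; split => w // [[_ Aw] [_ Bw]].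
  by rewrite -(pinfty_ninfty_disj fs xi z); split.
rewrite (markov_cyl _ xim iid) markov_B -ge0_muleDr // (P_Cyl iid) [(cc%:E * _)%E]muleC.
apply: lee_wpmul2l; first by rewrite lee_fin ltW // prodw_gt0.
exact: cc_le.
Qed.

Lemma lev_bound n S z :
  (cc%:E * P (Lev xi n S) <= P ((A z `|` B z) `&` Lev xi n S))%E.
Proof.
have mE : measurable (A z `|` B z) by apply: measurableU; [exact: mA|exact: mB].
rewrite -[Lev xi n S]setTI P_Lev_sum // setTI P_Lev_sum // -nneseriesZl //.
apply: lee_nneseries => [k _ _|k _]; first by rewrite mule_ge0 // lee_fin ltW // cc_gt0.
case: (pc_cases xi n S k) => [[s [sm [Ss E]]]|E]; rewrite !E.
  by rewrite setTI cyl_bound.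
by rewrite !setI0 measure0 mule0.
Qed.

Theorem final z : (P (A z) + P (B z) = 1)%E.
Proof.
have mE : measurable (A z `|` B z) by apply: measurableU; [exact: mA|exact: mB].
have disj : A z `&` B z = set0 := pinfty_ninfty_disj fs xi z.
have -> : (P (A z) + P (B z))%E = P (A z `|` B z).
  by apply/esym; apply: measureU => //; [exact: mA|exact: mB].
set E := A z `|` B z.
have aN : approx P xi (~` E).
  apply: approx_C; apply: (approx_U xim); first exact: approx_pinfty.
  by rewrite ninfty_negf; exact: approx_pinfty.
have mN : measurable (~` E) by exact: measurableC.
suff N0 : Pr P (~` E) = 0.
  have := probability_setC P mE; rewrite (PrE P mN) N0 (PrE P mE) -EFinB => -[h].
  congr (_%:E); lra.
apply/eqP; rewrite eq_le Pr_ge0 andbT; apply/negP => /negP; rewrite -ltNge => dpos.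
set dl := Pr P (~` E) in dpos.
have cpos := cc_gt0; have c1 := cc_le1.
have epos : 0 < cc * dl by rewrite mulr_gt0.
have [n [S HS]] := aN.2 _ epos.
set U := Lev xi n S in HS.
have mU : measurable U by exact: Lev_meas.
have f1 : dl <= Pr P (~` E `\` U) + Pr P U.
  apply: le_trans (Pr_U2 _ _ _); [|exact: measurableD|exact: mU].
  apply: Pr_le => //; first by apply: measurableU => //; exact: measurableD.
  by move=> w Nw; have [Uw|Uw] := pselect (U w); [right|left].
have f2 : cc * Pr P U <= Pr P (U `\` ~` E).
  have := lev_bound n S z; rewrite -/E -/U (PrE P mU) -EFinM.
  rewrite (_ : E `&` U = U `\` ~` E); last by rewrite setDE setCK setIC.
  by rewrite (PrE P) ?lee_fin //; exact: measurableD.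
have g1 := Pr_ge0 P (~` E `\` U); have g2 := Pr_ge0 P (U `\` ~` E).
have g3 := Pr_ge0 P U.
have h1 : cc * dl <= cc * (Pr P (~` E `\` U) + Pr P U) by rewrite ler_wpM2l // ltW.
have h2 : cc * Pr P (~` E `\` U) <= Pr P (~` E `\` U) by rewrite ler_piMl.
rewrite mulrDr in h1.
exfalso; exact: (final_arith h1 h2 f2 HS).
Qed.

End Final.

Theorem proposition2 (R : realType) (I : countType) (fs : I -> R -> R) (p : I -> R)
  (d : measure_display) (Omega : measurableType d) (P : probability Omega R)
  (xi : nat -> Omega -> I) :
  injective fs ->
  (forall i, homeo_plus (fs i)) ->
  (forall i, 0 < p i) ->
  (\esum_(i in [set: I]) (p i)%:E = 1)%E ->
  (forall n i, measurable (xi n @^-1` [set i])) ->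
  iid_law P p xi ->
  shiftable fs ->
  (exists x : R, (0 < P (event_pinfty fs xi x))%E) ->
  (exists y : R, (0 < P (event_ninfty fs xi y))%E) ->
  forall z : R, (P (event_pinfty fs xi z) + P (event_ninfty fs xi z) = 1)%E.
Proof.
move=> _ hom ppos _ xim iid shf hx hy z.
have fs_mono i : {homo fs i : a b / a <= b}.
  move=> a b; rewrite le_eqVlt => /orP [/eqP ->|ab] //.
  by apply: ltW; have [_ [_ h]] := hom i; exact: h.
have fcont i : continuous (fs i : R -> R) by have [_ [h _]] := hom i.
exact: (final xim iid ppos fs_mono fcont shf hx hy).
Qed.
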